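(* Every $K$-contact Lie algebroid of rank $3$ is Sasakian: if $E$ is a Lie algebroid of rank $3$ with a contact Riemannian structure $(F_E,\xi,\eta,g_E)$ such that $\xi$ is a Killing section of $g_E$, then the structure is normal, i.e. $N_{F_E}+2\,d_E\eta\otimes\xi=0$.
   Context: A Lie algebroid $(E,\rho_E,[\cdot,\cdot]_E)$ over $M$ is a vector bundle with anchor $\rho_E:E\to TM$ and Lie bracket on $\Gamma(E)$ with $[s_1,fs_2]_E=f[s_1,s_2]_E+\rho_E(s_1)(f)s_2$. For a 1-form $\eta$, $(d_E\eta)(s_1,s_2)=\frac12\{\rho_E(s_1)(\eta(s_2))-\rho_E(s_2)(\eta(s_1))-\eta([s_1,s_2]_E)\}$. For $E$ of rank $2m+1$, an almost contact Riemannian structure $(F_E,\xi,\eta,g_E)$: endomorphism $F_E$, $\xi\in\Gamma(E)$, $\eta\in\Gamma(E^* )$, bundle metric $g_E$ with $F_E^2=-I_E+\eta\otimes\xi$, $\eta(\xi)=1$, $g_E(F_Es_1,F_Es_2)=g_E(s_1,s_2)-\eta(s_1)\eta(s_2)$; fundamental form $\Omega_E(s_1,s_2)=g_E(s_1,F_Es_2)$. It is contact Riemannian if also $\eta\wedge(d_E\eta)^m$ vanishes nowhere and $d_E\eta=\Omega_E$. $\xi$ is Killing if $\rho_E(\xi)(g_E(s_1,s_2))-g_E([\xi,s_1]_E,s_2)-g_E(s_1,[\xi,s_2]_E)=0$; $K$-contact = contact Riemannian with $\xi$ Killing. $N_{F_E}(s_1,s_2)=[F_Es_1,F_Es_2]_E-F_E[F_Es_1,s_2]_E-F_E[s_1,F_Es_2]_E+F_E^2[s_1,s_2]_E$;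 Sasakian = contact Riemannian and normal ($N_{F_E}+2\,d_E\eta\otimes\xi=0$). *)

(* Defs.v *)
(* Lie algebroids over a manifold M, modelled through their
   smooth sections: fibres E p (finite-dimensional real vector spaces),
   a predicate of smooth functions on M and of smooth sections of E,
   anchor (acting as derivations on smooth functions) and bracket. *)
From HB Require Import structures.
From mathcomp Require Import all_boot all_order all_algebra.
From mathcomp Require Import reals.
Set Implicit Arguments.
Unset Strict Implicit.
Unset Printing Implicit Defensive.
Import Order.TTheory GRing.Theory Num.Theory.
Local Open Scope ring_scope.

Section LieAlgebroid.
Variables (R : realType) (M : Type) (E : M -> vectType R).

(* (not necessarily smooth) sections of E *)
Definition section := forall p : M, E p.
Definition sadd (s t : section) : section := fun p => s p + t p.
Definition sscale (f : M -> R) (s : section) : section := fun p => f p *: s p.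

Record lie_algebroid := LieAlgebroid {
  smoothf : (M -> R) -> Prop;
  smooths : section -> Prop;
  anchor : section -> (M -> R) -> (M -> R);
  lbr : section -> section -> section;
  smoothf_cst : forall c : R, smoothf (fun _ => c);
  smoothf_add : forall f h, smoothf f -> smoothf h -> smoothf (fun p => f p + h p);
  smoothf_mul : forall f h, smoothf f -> smoothf h -> smoothf (fun p => f p * h p);
  smooths_add : forall s t, smooths s -> smooths t -> smooths (sadd s t);
  smooths_scale : forall f s, smoothf f -> smooths s -> smooths (sscale f s);
  smooths_enough : forall p (v : E p), exists s, smooths s /\ s p = v;
  (* locality (holds for smooth vector bundles via local frames and bump
     functions): a smooth section vanishing at p is a finite combination of
     smooth sections with smooth coefficients vanishing at p *)
  smooths_local : forall p s, smooths s -> s p = 0 ->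
    exists n (f : 'I_n -> M -> R) (t : 'I_n -> section),
      (forall i, [/\ smoothf (f i), f i p = 0 & smooths (t i)]) /\
      s = (fun q => \sum_(i < n) f i q *: t i q);
  anchor_smooth : forall s f, smooths s -> smoothf f -> smoothf (anchor s f);
  anchor_add_s : forall s t f, smooths s -> smooths t -> smoothf f ->
    anchor (sadd s t) f = (fun p => anchor s f p + anchor t f p);
  anchor_scale_s : forall h s f, smoothf h -> smooths s -> smoothf f ->
    anchor (sscale h s) f = (fun p => h p * anchor s f p);
  anchor_add_f : forall s f h, smooths s -> smoothf f -> smoothf h ->
    anchor s (fun p => f p + h p) = (fun p => anchor s f p + anchor s h p);
  anchor_mul_f : forall s f h, smooths s -> smoothf f -> smoothf h ->
    anchor s (fun p => f p * h p) =
    (fun p => f p * anchor s h p + h p * anchor s f p);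
  lbr_smooth : forall s t, smooths s -> smooths t -> smooths (lbr s t);
  lbr_add_l : forall s t u, smooths s -> smooths t -> smooths u ->
    lbr (sadd s t) u = sadd (lbr s u) (lbr t u);
  lbr_scale_l : forall (c : R) s u, smooths s -> smooths u ->
    lbr (sscale (fun _ => c) s) u = sscale (fun _ => c) (lbr s u);
  lbr_anti : forall s t, smooths s -> smooths t ->
    lbr s t = (fun p => - lbr t s p);
  lbr_jacobi : forall s t u, smooths s -> smooths t -> smooths u ->
    sadd (lbr s (lbr t u)) (sadd (lbr t (lbr u s)) (lbr u (lbr s t)))
    = (fun p => 0);
  lbr_leibniz : forall s f t, smooths s -> smoothf f -> smooths t ->
    lbr s (sscale f t) = sadd (sscale f (lbr s t)) (sscale (anchor s f) t);
  (* anchor is a morphism of brackets (a consequence of the above) *)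
  anchor_hom : forall s t f, smooths s -> smooths t -> smoothf f ->
    anchor (lbr s t) f = (fun p => anchor s (anchor t f) p - anchor t (anchor s f) p)
}.

Variable L : lie_algebroid.

Record acr_structure := ACR {
  F : forall p, E p -> E p;
  xi : section;
  eta : forall p, E p -> R;
  g : forall p, E p -> E p -> R;
  F_linear : forall p (a : R) (u v : E p), F (a *: u + v) = a *: F u + F v;
  eta_linear : forall p (a : R) (u v : E p), eta (a *: u + v) = a * eta u + eta v;
  g_linear : forall p (a : R) (u v w : E p), g (a *: u + v) w = a * g u w + g v w;
  g_sym : forall p (u v : E p), g u v = g v u;
  g_pos : forall p (v : E p), v != 0 -> 0 < g v v;
  F_smooth : forall s, smooths L s -> smooths L (fun p => F (s p));
  xi_smooth : smooths L xi;
  eta_smooth : forall s, smooths L s -> smoothf L (fun p => eta (s p));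
  g_smooth : forall s t, smooths L s -> smooths L t ->
    smoothf L (fun p => g (s p) (t p));
  F2 : forall p (v : E p), F (F v) = - v + eta v *: xi p;
  eta_xi : forall p, eta (xi p) = 1;
  g_F : forall p (u v : E p), g (F u) (F v) = g u v - eta u * eta v
}.

Variable S : acr_structure.

Definition Fs (s : section) : section := fun p => F S (s p).
Definition etas (s : section) : M -> R := fun p => eta S (s p).
Definition gs (s t : section) : M -> R := fun p => g S (s p) (t p).

Definition Omega (s t : section) : M -> R := gs s (Fs t).

Definition d_eta (s t : section) : M -> R := fun p =>
  2^-1 * (anchor L s (etas t) p - anchor L t (etas s) p - etas (lbr L s t) p).

Definition eta_wedge_deta (s t u : section) : M -> R := fun p =>
  etas s p * d_eta t u p - etas t p * d_eta s u p + etas u p * d_eta s t p.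

Definition contact_riemannian3 : Prop :=
  (forall p, exists s t u, [/\ smooths L s, smooths L t, smooths L u &
                               eta_wedge_deta s t u p != 0]) /\
  (forall s t, smooths L s -> smooths L t -> d_eta s t = Omega s t).

Definition killing : Prop :=
  forall s t, smooths L s -> smooths L t ->
    (fun p => anchor L (xi S) (gs s t) p - gs (lbr L (xi S) s) t p
              - gs s (lbr L (xi S) t) p) = (fun _ => 0).

Definition K_contact3 : Prop := contact_riemannian3 /\ killing.

Definition nijenhuis (s t : section) : section := fun p =>
  lbr L (Fs s) (Fs t) p - Fs (lbr L (Fs s) t) p - Fs (lbr L s (Fs t)) p
  + Fs (Fs (lbr L s t)) p.

Definition normal : Prop :=
  forall s t, smooths L s -> smooths L t ->
    (fun p => nijenhuis s t p + (2 * d_eta s t p) *: xi S p) = (fun _ => 0).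

Definition sasakian3 : Prop := contact_riemannian3 /\ normal.

End LieAlgebroid.

(* Main.v *)
Require Import Defs.
From HB Require Import structures.
From mathcomp Require Import all_boot all_order all_algebra.
From mathcomp Require Import reals.
From mathcomp Require Import ring lra.
From Stdlib Require Import FunctionalExtensionality.
Set Implicit Arguments.
Unset Strict Implicit.
Unset Printing Implicit Defensive.
Import Order.TTheory GRing.Theory Num.Theory.
Local Open Scope ring_scope.

Section Pointwise.
Variables (R : realType) (M : Type) (E : M -> vectType R)
  (L : lie_algebroid E) (S : acr_structure L).
Variable p : M.
Implicit Types u v w : E p.

Lemma F0 : F S (0 : E p) = 0.
Proof.
have := F_linear S 1 (0 : E p) 0; rewrite scale1r addr0 scale1r => h.
by apply: (@addrI _ (F S 0)); rewrite addr0 -h.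
Qed.
Lemma FD u v : F S (u + v) = F S u + F S v.
Proof. by have := F_linear S 1 u v; rewrite !scale1r. Qed.
Lemma FZ a u : F S (a *: u) = a *: F S u.
Proof. by have := F_linear S a u 0; rewrite !addr0 F0 addr0. Qed.
Lemma FN u : F S (- u) = - F S u.
Proof. by rewrite -scaleN1r FZ scaleN1r. Qed.
Lemma FB u v : F S (u - v) = F S u - F S v.
Proof. by rewrite FD FN. Qed.

Lemma eta0 : Defs.eta S (0 : E p) = 0.
Proof.
have := eta_linear S 1 (0 : E p) 0; rewrite scale1r addr0 mul1r => h.
by apply: (@addrI _ (Defs.eta S (0 : E p))); rewrite addr0 -h.
Qed.
Lemma etaD u v : Defs.eta S (u + v) = Defs.eta S u + Defs.eta S v.
Proof. by have := eta_linear S 1 u v; rewrite scale1r mul1r. Qed.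
Lemma etaZ a u : Defs.eta S (a *: u) = a * Defs.eta S u.
Proof. by have := eta_linear S a u 0; rewrite !addr0 eta0 addr0. Qed.
Lemma etaN u : Defs.eta S (- u) = - Defs.eta S u.
Proof. by rewrite -scaleN1r etaZ mulN1r. Qed.
Lemma etaB u v : Defs.eta S (u - v) = Defs.eta S u - Defs.eta S v.
Proof. by rewrite etaD etaN. Qed.

Lemma g0l w : g S (0 : E p) w = 0.
Proof.
have := g_linear S 1 (0 : E p) 0 w; rewrite scale1r addr0 mul1r => h.
by apply: (@addrI _ (g S (0 : E p) w)); rewrite addr0 -h.
Qed.
Lemma gDl u v w : g S (u + v) w = g S u w + g S v w.
Proof. by have := g_linear S 1 u v w; rewrite scale1r mul1r. Qed.
Lemma gZl a u w : g S (a *: u) w = a * g S u w.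
Proof. by have := g_linear S a u 0 w; rewrite !addr0 g0l addr0. Qed.
Lemma gNl u w : g S (- u) w = - g S u w.
Proof. by rewrite -scaleN1r gZl mulN1r. Qed.
Lemma gBl u v w : g S (u - v) w = g S u w - g S v w.
Proof. by rewrite gDl gNl. Qed.
Lemma g0r w : g S w (0 : E p) = 0.
Proof. by rewrite g_sym g0l. Qed.
Lemma gDr u v w : g S w (u + v) = g S w u + g S w v.
Proof. by rewrite !(g_sym S w) gDl. Qed.
Lemma gZr a u w : g S w (a *: u) = a * g S w u.
Proof. by rewrite !(g_sym S w) gZl. Qed.
Lemma gNr u w : g S w (- u) = - g S w u.
Proof. by rewrite !(g_sym S w) gNl. Qed.
Lemma gBr u v w : g S w (u - v) = g S w u - g S w v.
Proof. by rewrite !(g_sym S w) gBl. Qed.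

Lemma xi_neq0 : xi S p != 0.
Proof. apply/eqP => h; have := eta_xi S p; rewrite h eta0 => /eqP; by rewrite eq_sym oner_eq0. Qed.

Lemma F_xi : F S (xi S p) = 0.
Proof.
set w := F S (xi S p).
have Fw : F S w = 0 by rewrite /w F2 eta_xi scale1r addNr.
have h1 : w = Defs.eta S w *: xi S p.
  have := F2 S w; rewrite Fw F0 => /eqP; rewrite eq_sym addrC subr_eq0 => /eqP.
  by [].
have h2 : Defs.eta S w = 0.
  have : F S w = Defs.eta S w *: w by rewrite {1}h1 FZ.
  rewrite Fw {2}h1 scalerA => /eqP; rewrite eq_sym scaler_eq0 (negbTE xi_neq0) orbF.
  by rewrite mulf_eq0 orbb => /eqP.
by rewrite h1 h2 scale0r.
Qed.

Lemma eta_F u : Defs.eta S (F S u) = 0.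
Proof.
have h : F S (F S (F S u)) = - F S u.
  by rewrite (F2 S u) FD FN FZ F_xi scaler0 addr0.
have e : Defs.eta S (F S u) *: xi S p = 0 by apply: (@addrI _ (- F S u)); rewrite addr0 -(F2 S (F S u)) h.
by move/eqP: e; rewrite scaler_eq0 (negbTE xi_neq0) orbF => /eqP.
Qed.

Lemma eta_g u : Defs.eta S u = g S u (xi S p).
Proof.
have := g_F S u (xi S p); rewrite F_xi g0r eta_xi mulr1 => /eqP.
by rewrite eq_sym subr_eq0 => /eqP.
Qed.

Lemma gFF u : g S (F S u) (F S u) = g S u u - Defs.eta S u ^+ 2.
Proof. by rewrite g_F expr2. Qed.

Lemma Omega_anti u v : g S u (F S v) = - g S v (F S u).
Proof.
have := g_F S v (F S u); rewrite eta_F mulr0 subr0 F2 gDr gNr gZr.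
rewrite -eta_g eta_F mulr0 addr0 => <-.
by rewrite opprK g_sym.
Qed.

Lemma g_uFu u : g S u (F S u) = 0.
Proof.
have h := Omega_anti u u.
have : g S u (F S u) *+ 2 = 0 by rewrite mulr2n {1}h addNr.
by move/eqP; rewrite -mulr_natr mulf_eq0 pnatr_eq0 orbF => /eqP.
Qed.

Lemma vec_anti0 (x : E p) : x = - x -> x = 0.
Proof.
move=> h; have : (2%:R : R) *: x = 0 by rewrite scaler_nat mulr2n {1}h addNr.
by move/eqP; rewrite scaler_eq0 pnatr_eq0 /= => /eqP.
Qed.

Lemma g_nondeg w : (forall v, g S v w = 0) -> w = 0.
Proof.
move=> h; apply/eqP; apply: contraT => nz.
by have := g_pos S nz; rewrite h ltxx.
Qed.

End Pointwise.

Section Basis.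
Variables (R : realType) (M : Type) (E : M -> vectType R)
  (L : lie_algebroid E) (S : acr_structure L).
Variable p : M.
Hypothesis hdim : \dim (fullv : {vspace E p}) = 3%N.

Lemma span3 (u y : E p) : u != 0 -> Defs.eta S u = 0 -> Defs.eta S y = 0 ->
  exists c d, y = c *: u + d *: F S u.
Proof.
move=> nu eu ey.
set X := [tuple xi S p; u; F S u].
have gu : 0 < g S u u by exact: g_pos.
have hfree : free X.
  apply/freeP => k hk.
  rewrite !big_ord_recl big_ord0 /= in hk.
  set k0 := k ord0 in hk; set k1 := k (lift ord0 ord0) in hk.
  set k2 := k (lift ord0 (lift ord0 ord0)) in hk.
  have h0 : k0 = 0.
    have := congr1 (@Defs.eta _ _ _ _ S p) hk; rewrite !etaD !etaZ eta_xi eu eta_F eta0.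
    by rewrite !mulr0 mulr1 !addr0.
  have h1 : k1 = 0.
    have := congr1 (g S u) hk; rewrite !gDr !gZr g0r -eta_g eu g_uFu h0.
    rewrite !mulr0 !addr0 add0r => /eqP; rewrite mulf_eq0 (gt_eqF gu) orbF => /eqP //.
  have h2 : k2 = 0.
    have := congr1 (g S (F S u)) hk; rewrite !gDr !gZr g0r -eta_g eta_F.
    rewrite g_sym g_uFu gFF eu h0 h1 expr2 !mulr0 subr0 !addr0 !add0r.
    by move/eqP; rewrite mulf_eq0 (gt_eqF gu) orbF => /eqP.
  case=> [[|[|[|m]]] Hi].
  - by rewrite (_ : Ordinal Hi = ord0) //; exact: val_inj.
  - by rewrite (_ : Ordinal Hi = lift ord0 ord0) //; exact: val_inj.
  - by rewrite (_ : Ordinal Hi = lift ord0 (lift ord0 ord0)) //; exact: val_inj.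
  - by [].
have hb : basis_of fullv X by rewrite basisEfree hfree subvf hdim.
move/andP: hb => [/eqP hX _].
have hy : y \in <<X>>%VS by rewrite hX memvf.
have := coord_span hy; rewrite !big_ord_recl big_ord0 /= => ey'.
exists (coord X (lift ord0 ord0) y), (coord X (lift ord0 (lift ord0 ord0)) y).
have c0 : coord X ord0 y = 0.
  have := congr1 (@Defs.eta _ _ _ _ S p) ey'; rewrite ey !etaD !etaZ eta_xi eu eta_F eta0.
  by rewrite !mulr0 mulr1 !addr0 => ->.
by rewrite {1}ey' c0 scale0r add0r addr0.
Qed.
End Basis.


Lemma Z1 (V : zmodType) (x1 x2 x3 x4 a b : V) :
  (x1 - a) - (x2 - b) - (x3 - a) + (x4 - b) = x1 - x2 - x3 + x4.
Proof.
rewrite !opprB -!addrA; congr (_ + _).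
rewrite (addrCA b) (addrCA (- a)); congr (_ + _).
rewrite (addrCA b) addKr (addrCA b); congr (_ + _).
by rewrite addrC addrNK.
Qed.
Lemma Z2 (V : zmodType) (a1 a2 b1 b2 c1 c2 d1 d2 : V) :
  (a1 + a2) - (b1 + b2) - (c1 + c2) + (d1 + d2) = (a1 - b1 - c1 + d1) + (a2 - b2 - c2 + d2).
Proof. rewrite !opprD. rewrite (addrACA a1). rewrite (addrACA (a1 - b1)). by rewrite (addrACA (a1 - b1 - c1)). Qed.

Section Alg.
Variables (R : realType) (M : Type) (E : M -> vectType R)
  (L : lie_algebroid E) (S : acr_structure L).
Local Notation sm := (smooths L).
Local Notation sf := (smoothf L).
Local Notation br := (lbr L).
Local Notation an := (anchor L).
Local Notation XI := (xi S).
Local Notation sec := (section E).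

Lemma sext (s t : sec) : (forall p, s p = t p) -> s = t.
Proof. exact: functional_extensionality_dep. Qed.
Lemma fext (f h : M -> R) : (forall p, f p = h p) -> f = h.
Proof. exact: functional_extensionality. Qed.

Definition zs : sec := fun p => 0.
Lemma zs_sm : sm zs.
Proof.
have -> : zs = sscale (fun _ => 0) XI by apply: sext => p; rewrite /sscale scale0r.
exact: (smooths_scale (smoothf_cst L 0) (xi_smooth S)).
Qed.
Lemma opp_sm s : sm s -> sm (fun p => - s p).
Proof.
move=> hs; have -> : (fun p => - s p) = sscale (fun _ => -1) s.
  by apply: sext => p; rewrite /sscale scaleN1r.
exact: smooths_scale (smoothf_cst L _) hs.
Qed.
Lemma Fs_sm s : sm s -> sm (Fs S s).
Proof. exact: F_smooth. Qed.
Lemma sub_sm s t : sm s -> sm t -> sm (fun p => s p - t p).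
Proof. move=> hs ht; exact: (smooths_add hs (opp_sm ht)). Qed.
Lemma oppf_sm f : sf f -> sf (fun p => - f p).
Proof.
move=> hf; have -> : (fun p => - f p) = (fun p => (fun _ => -1) p * f p).
  by apply: fext => p; rewrite mulN1r.
exact: smoothf_mul (smoothf_cst L _) hf.
Qed.
Lemma subf_sm f h : sf f -> sf h -> sf (fun p => f p - h p).
Proof. move=> hf hh; exact: (smoothf_add hf (oppf_sm hh)). Qed.
Lemma etas_sm s : sm s -> sf (etas S s).
Proof. exact: eta_smooth. Qed.

Lemma an0 s f : sm s -> sf f -> an s (fun p => f p - f p) = fun _ => 0.
Proof.
move=> hs hf; set z := fun p => f p - f p.
have hz : sf z by exact: subf_sm.
have e : z = (fun p => z p + z p) by apply: fext => p; rewrite /z subrr addr0.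
have := anchor_add_f hs hz hz; rewrite -e => h.
apply: fext => p; have := congr1 (fun k => k p) h => /= /eqP.
by rewrite -subr_eq0 opprD addrA subrr sub0r oppr_eq0 => /eqP.
Qed.
Lemma an_cst0 s : sm s -> an s (fun _ => 0) = fun _ => 0.
Proof.
move=> hs; have := an0 hs (smoothf_cst L 0).
have -> : (fun _ : M => (0:R) - 0) = fun _ => 0 by apply: fext => p; rewrite subrr.
by [].
Qed.
Lemma an_cst1 s : sm s -> an s (fun _ => 1) = fun _ => 0.
Proof.
move=> hs; have h1 := smoothf_cst L 1.
have := anchor_mul_f hs h1 h1.
have -> : (fun p : M => (fun _ => 1 : R) p * (fun _ => 1) p) = fun _ => 1.
  by apply: fext => p; rewrite mulr1.
move=> h; apply: fext => p; have := congr1 (fun k => k p) h => /= /eqP.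
by rewrite !mul1r -subr_eq0 opprD addrA subrr sub0r oppr_eq0 => /eqP.
Qed.
Lemma an_sub s f h : sm s -> sf f -> sf h ->
  an s (fun p => f p - h p) = fun p => an s f p - an s h p.
Proof.
move=> hs hf hh.
have e : f = (fun p => (fun q => f q - h q) p + h p) by apply: fext => p; rewrite subrK.
have := anchor_add_f hs (subf_sm hf hh) hh; rewrite -e => h'.
apply: fext => p; rewrite h' /=; by rewrite addrK.
Qed.
Lemma an_half s h : sm s -> sf h ->
  an s (fun p => 2^-1 * h p) = fun p => 2^-1 * an s h p.
Proof.
move=> hs hh; set k := fun p => 2^-1 * h p.
have hk : sf k by exact: smoothf_mul (smoothf_cst L _) hh.
have e : h = (fun p => k p + k p).
  by apply: fext => p; rewrite /k; field.
have := anchor_add_f hs hk hk; rewrite -e => h'.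
apply: fext => p; rewrite h' /k; by field.
Qed.

Lemma zs_scale : zs = sscale (fun _ => 0) XI.
Proof. by apply: sext => p; rewrite /sscale scale0r. Qed.
Lemma br_zs_l t : sm t -> br zs t = zs.
Proof.
move=> ht; rewrite zs_scale lbr_scale_l //; last exact: xi_smooth.
by apply: sext => p; rewrite /sscale !scale0r.
Qed.
Lemma br_opp_l s t : sm s -> sm t -> br (fun p => - s p) t = fun p => - br s t p.
Proof.
move=> hs ht; have -> : (fun p => - s p) = sscale (fun _ => -1) s.
  by apply: sext => p; rewrite /sscale scaleN1r.
by rewrite lbr_scale_l //; apply: sext => p; rewrite /sscale scaleN1r.
Qed.
Lemma br_anti_p s t p : sm s -> sm t -> br t s p = - br s t p.
Proof. by move=> hs ht; rewrite (lbr_anti ht hs). Qed.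
Lemma br_opp_r s t : sm s -> sm t -> br s (fun p => - t p) = fun p => - br s t p.
Proof.
move=> hs ht; apply: sext => p.
rewrite (br_anti_p p (opp_sm ht) hs) br_opp_l // opprK.
by rewrite (br_anti_p p hs ht).
Qed.
Lemma br_add_r s t u : sm s -> sm t -> sm u -> br s (sadd t u) = sadd (br s t) (br s u).
Proof.
move=> hs ht hu; apply: sext => p.
rewrite (br_anti_p p (smooths_add ht hu) hs) lbr_add_l // /sadd.
by rewrite (br_anti_p p hs ht) (br_anti_p p hs hu) opprD !opprK.
Qed.
Lemma br_scale_lf s t f : sm s -> sm t -> sf f ->
  br (sscale f s) t = fun p => f p *: br s t p - an t f p *: s p.
Proof.
move=> hs ht hf; apply: sext => p.
rewrite (br_anti_p p ht (smooths_scale hf hs)) lbr_leibniz // /sadd /sscale.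
by rewrite (br_anti_p p hs ht) opprD scalerN opprK.
Qed.
Lemma Fs_sadd s t : Fs S (sadd s t) = sadd (Fs S s) (Fs S t).
Proof. by apply: sext => p; rewrite /Fs /sadd FD. Qed.
Lemma Fs_sscale f s : Fs S (sscale f s) = sscale f (Fs S s).
Proof. by apply: sext => p; rewrite /Fs /sscale FZ. Qed.

Lemma FsE s p : Fs S s p = F S (s p). Proof. by []. Qed.
Lemma saddE (s t : sec) p : sadd s t p = s p + t p. Proof. by []. Qed.
Lemma sscaleE f (s : sec) p : sscale f s p = f p *: s p. Proof. by []. Qed.

Definition Tp (s t : sec) : sec :=
  fun p => nijenhuis S s t p + (2 * Omega S s t p) *: XI p.

Lemma T_add_l s1 s2 t : sm s1 -> sm s2 -> sm t ->
  Tp (sadd s1 s2) t = fun p => Tp s1 t p + Tp s2 t p.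
Proof.
move=> h1 h2 ht; apply: sext => p.
rewrite /Tp /nijenhuis Fs_sadd.
rewrite (lbr_add_l (Fs_sm h1) (Fs_sm h2) (Fs_sm ht)).
rewrite (lbr_add_l (Fs_sm h1) (Fs_sm h2) ht).
rewrite (lbr_add_l h1 h2 (Fs_sm ht)).
rewrite (lbr_add_l h1 h2 ht).
rewrite /Omega /gs !FsE !saddE !FD Z2 gDl mulrDr scalerDl.
by rewrite addrACA.
Qed.

Lemma T_scale_l s t f : sm s -> sm t -> sf f ->
  Tp (sscale f s) t = fun p => f p *: Tp s t p.
Proof.
move=> hs ht hf; apply: sext => p.
rewrite /Tp /nijenhuis Fs_sscale.
rewrite (br_scale_lf (Fs_sm hs) (Fs_sm ht) hf).
rewrite (br_scale_lf (Fs_sm hs) ht hf).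
rewrite (br_scale_lf hs (Fs_sm ht) hf).
rewrite (br_scale_lf hs ht hf).
rewrite /Omega /gs !FsE !sscaleE !FB !FZ Z1 gZl.
by rewrite !(scalerDr, scalerN) scalerA mulrCA.
Qed.

Lemma T_anti s t p : sm s -> sm t -> Tp t s p = - Tp s t p.
Proof.
move=> hs ht; rewrite /Tp /nijenhuis.
rewrite (br_anti_p p (Fs_sm hs) (Fs_sm ht)).
rewrite /Fs (br_anti_p _ hs (Fs_sm ht)) (br_anti_p _ (Fs_sm hs) ht) (br_anti_p _ hs ht).
rewrite /Omega /gs /Fs Omega_anti !FN mulrN scaleNr.
rewrite !opprD !opprK; congr (_ + _).
rewrite -!addrA; congr (_ + _); rewrite addrCA; congr (_ + _); by rewrite addrC.
Qed.

Lemma T_sum n (f : 'I_n -> M -> R) (t : 'I_n -> sec) u p :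
  (forall i, sf (f i) /\ sm (t i)) -> sm u ->
  sm (fun q => \sum_(i < n) f i q *: t i q) /\
  Tp (fun q => \sum_(i < n) f i q *: t i q) u p = \sum_(i < n) f i p *: Tp (t i) u p.
Proof.
elim: n f t => [|n IH] f t hft hu.
  have -> : (fun q => \sum_(i < 0) f i q *: t i q) = sscale (fun _ => 0) XI.
    by apply: sext => q; rewrite big_ord0 sscaleE scale0r.
  split; first exact: smooths_scale (smoothf_cst L 0) (xi_smooth S).
  by rewrite T_scale_l ?scale0r ?big_ord0 //; [exact: xi_smooth | exact: smoothf_cst].
have [hs' he'] := IH (fun i => f (lift ord0 i)) (fun i => t (lift ord0 i))
   (fun i => hft (lift ord0 i)) hu.
have [hf0 ht0] := hft ord0.
have -> : (fun q => \sum_(i < n.+1) f i q *: t i q) =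
  sadd (sscale (f ord0) (t ord0)) (fun q => \sum_(i < n) f (lift ord0 i) q *: t (lift ord0 i) q).
  by apply: sext => q; rewrite big_ord_recl.
split; first exact: smooths_add (smooths_scale hf0 ht0) hs'.
rewrite T_add_l //; last exact: smooths_scale.
by rewrite he' T_scale_l // big_ord_recl.
Qed.

Lemma T_loc s u p : sm s -> sm u -> s p = 0 -> Tp s u p = 0.
Proof.
move=> hs hu hp.
have [n [f [t [hi ->]]]] := smooths_local hs hp.
have hft : forall i, sf (f i) /\ sm (t i) by move=> i; have [? ? ?] := hi i.
have [_ ->] := T_sum p hft hu.
by apply: big1 => i _; have [_ -> _] := hi i; rewrite scale0r.
Qed.

Lemma T_eq_l s1 s2 u p : sm s1 -> sm s2 -> sm u -> s1 p = s2 p -> Tp s1 u p = Tp s2 u p.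
Proof.
move=> h1 h2 hu e.
have -> : s1 = sadd s2 (fun q => s1 q - s2 q) by apply: sext => q; rewrite saddE addrC subrK.
rewrite T_add_l //; last exact: sub_sm.
by rewrite (T_loc (sub_sm h1 h2) hu) ?addr0 // e subrr.
Qed.

Lemma T_eq_r s u1 u2 p : sm s -> sm u1 -> sm u2 -> u1 p = u2 p -> Tp s u1 p = Tp s u2 p.
Proof.
move=> hs h1 h2 e; rewrite -(opprK (Tp s u1 p)) -T_anti // (T_eq_l h1 h2 hs e) T_anti //.
by rewrite opprK.
Qed.

Hypothesis hc : forall s t, sm s -> sm t -> d_eta S s t = Omega S s t.

Lemma etas_xi : etas S XI = fun _ => 1.
Proof. by apply: fext => q; rewrite /etas eta_xi. Qed.

Lemma eta_br_xi Z : sm Z -> an XI (etas S Z) = etas S (br XI Z).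
Proof.
move=> hZ; apply: fext => p.
have := congr1 (fun k => k p) (hc (xi_smooth S) hZ).
rewrite /= /Omega /gs FsE g_sym -eta_g eta_F /d_eta etas_xi an_cst1 // subr0.
move/eqP; rewrite mulf_eq0 invr_eq0 pnatr_eq0 /= subr_eq0 => /eqP //.
Qed.

Lemma LieDeta X Y p : sm X -> sm Y ->
  an XI (d_eta S X Y) p = d_eta S (br XI X) Y p + d_eta S X (br XI Y) p.
Proof.
move=> hX hY; have hxi := xi_smooth S.
have sA1 : sf (an X (etas S Y)) by apply: anchor_smooth => //; exact: etas_sm.
have sA2 : sf (an Y (etas S X)) by apply: anchor_smooth => //; exact: etas_sm.
have sA3 : sf (etas S (br X Y)) by apply: etas_sm; exact: lbr_smooth.
have e : d_eta S X Y = fun q => 2^-1 * (fun q =>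
   (fun q => an X (etas S Y) q - an Y (etas S X) q) q - etas S (br X Y) q) q by [].
rewrite e an_half //; last by apply: subf_sm => //; exact: subf_sm.
rewrite an_sub //; last exact: subf_sm.
rewrite an_sub //.
have h1 : an XI (an X (etas S Y)) p =
    an (br XI X) (etas S Y) p + an X (etas S (br XI Y)) p.
  have := congr1 (fun k => k p) (anchor_hom hxi hX (etas_sm hY)).
  by rewrite /= eta_br_xi // => ->; rewrite subrK.
have h2 : an XI (an Y (etas S X)) p =
    an (br XI Y) (etas S X) p + an Y (etas S (br XI X)) p.
  have := congr1 (fun k => k p) (anchor_hom hxi hY (etas_sm hX)).
  by rewrite /= eta_br_xi // => ->; rewrite subrK.
have h3 : an XI (etas S (br X Y)) p =
    etas S (br (br XI X) Y) p + etas S (br X (br XI Y)) p.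
  rewrite eta_br_xi; last exact: lbr_smooth.
  have := congr1 (fun k => Defs.eta S (k p)) (lbr_jacobi hxi hX hY).
  rewrite /= !saddE (lbr_anti hY hxi) br_opp_r //; last exact: lbr_smooth.
  rewrite (br_anti_p p (lbr_smooth hxi hX) hY) /etas !etaD !etaN eta0 => h.
  lra.
rewrite h1 h2 h3 /d_eta; ring.
Qed.

Hypothesis hk : killing S.

Lemma KL t p : sm t -> br XI (Fs S t) p = F S (br XI t p).
Proof.
move=> ht; have hxi := xi_smooth S.
apply/eqP; rewrite -subr_eq0; apply/eqP; apply: (g_nondeg (S := S)) => v.
have [X [hX <-]] := smooths_enough L v.
rewrite gBr.
have := congr1 (fun k => k p) (hk hX (Fs_sm ht)).
rewrite /=.
have e1 : gs S X (Fs S t) = d_eta S X t by rewrite (hc hX ht).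
have e2 : gs S (br XI X) (Fs S t) p = d_eta S (br XI X) t p.
  by rewrite (hc (lbr_smooth hxi hX) ht).
have e3 : g S (X p) (F S (br XI t p)) = d_eta S X (br XI t) p.
  by rewrite (hc hX (lbr_smooth hxi ht)).
rewrite e1 e2 e3 LieDeta // /gs => h.
lra.
Qed.

Lemma T_xi t p : sm t -> Tp XI t p = 0.
Proof.
move=> ht; have hxi := xi_smooth S.
have hF : Fs S XI = zs by apply: sext => q; rewrite FsE F_xi.
rewrite /Tp /nijenhuis hF (br_zs_l (Fs_sm ht)) (br_zs_l ht) !FsE /zs F0 KL //.
rewrite /Omega /gs FsE g_sym -eta_g eta_F mulr0 scale0r addr0.
by rewrite subrr sub0r addNr.
Qed.

Lemma T_e a p : sm a -> Tp (Fs S a) (Fs S (Fs S a)) p = 0.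
Proof.
move=> ha; have he := Fs_sm ha; have hfe := Fs_sm he.
have hFF : Fs S (Fs S (Fs S a)) = fun q => - Fs S a q.
  by apply: sext => q; rewrite !FsE (F2 S (F S (a q))) eta_F scale0r addr0.
have hee : etas S (Fs S a) = fun _ => 0 by apply: fext => q; rewrite /etas FsE eta_F.
have hefe : etas S (Fs S (Fs S a)) = fun _ => 0 by apply: fext => q; rewrite /etas FsE eta_F.
rewrite /Tp -(hc he hfe) /nijenhuis hFF.
rewrite br_opp_r // br_opp_r //.
rewrite (br_anti_p p he hfe) opprK.
have z1 : br (Fs S (Fs S a)) (Fs S (Fs S a)) p = 0.
  by apply: vec_anti0; rewrite {1}(br_anti_p p hfe hfe).
have z2 : br (Fs S a) (Fs S a) p = 0.
  by apply: vec_anti0; rewrite {1}(br_anti_p p he he).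
rewrite !FsE z1 z2 oppr0 F0 !subr0.
rewrite (F2 S (br (Fs S a) (Fs S (Fs S a)) p)).
rewrite /d_eta hee hefe !an_cst0 // /etas.
have hx : forall x : R, 2 * (2^-1 * (0 - 0 - x)) = - x by move=> x; field.
by rewrite hx scaleNr addNKr subrr.
Qed.
Lemma red_l s t p : sm s -> sm t ->
  exists a, sm a /\ Tp s t p = Tp (Fs S a) t p.
Proof.
move=> hs ht.
set a := sscale (fun _ => -1) (Fs S s).
have ha : sm a by apply: smooths_scale (smoothf_cst L _) (Fs_sm hs).
exists a; split => //.
have e : s = sadd (sscale (etas S s) (xi S)) (Fs S a).
  apply: sext => q; rewrite saddE sscaleE FsE /a sscaleE FsE scaleN1r FN F2.
  by rewrite /etas opprD opprK addrCA subrr addr0.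
have hsx : sm (sscale (etas S s) (xi S)) by exact: smooths_scale (etas_sm hs) (xi_smooth S).
rewrite {1}e (T_add_l hsx (Fs_sm ha) ht).
by rewrite (T_scale_l (xi_smooth S) ht (etas_sm hs)) T_xi // scaler0 add0r.
Qed.

Lemma main_point s t p : \dim (fullv : {vspace E p}) = 3%N -> sm s -> sm t ->
  Tp s t p = 0.
Proof.
move=> hdim hs ht.
have [a [ha ->]] := red_l p hs ht.
have hfa := Fs_sm ha.
rewrite -(opprK (Tp (Fs S a) t p)) -T_anti //.
have [b [hb ->]] := red_l p ht hfa.
have hfb := Fs_sm hb.
rewrite T_anti // opprK.
have [u0|nu] := eqVneq (Fs S a p) 0.
  exact: T_loc.
have [c [d hy]] := span3 hdim nu (eta_F S _) (eta_F S (b p)).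
set w := sadd (sscale (fun _ => c) (Fs S a)) (sscale (fun _ => d) (Fs S (Fs S a))).
have hffa := Fs_sm hfa.
have hw : sm w.
  by apply: smooths_add; apply: smooths_scale => //; exact: smoothf_cst.
rewrite (T_eq_r hfa hfb hw (_ : Fs S b p = w p)); last first.
  by rewrite /w saddE !sscaleE FsE hy.
rewrite -(opprK (Tp (Fs S a) w p)) -T_anti //.
rewrite /w T_add_l //; try by apply: smooths_scale => //; exact: smoothf_cst.
rewrite !T_scale_l //; try exact: smoothf_cst.
have z1 : Tp (Fs S a) (Fs S a) p = 0.
  by apply: vec_anti0; rewrite {1}T_anti.
rewrite z1 T_anti // T_e // oppr0 !scaler0 addr0 oppr0 //.
Qed.
End Alg.

Theorem proposition4p9 (R : realType) (M : Type) (E : M -> vectType R)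
  (L : lie_algebroid E) (S : acr_structure L) :
  (forall p : M, \dim (fullv : {vspace E p}) = 3%N) ->
  K_contact3 S -> sasakian3 S.
Proof.
move=> hdim [[hnd hc] hk]; split; first by split.
move=> s t hs ht; apply: functional_extensionality_dep => p.
rewrite (hc s t hs ht).
exact: (main_point hc hk (hdim p) hs ht).
Qed.
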